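(* Let $d\in\{2,3\}$ and let $K\subset M^{m\times n}$ be a $d$-dimensional subspace without Rank-$1$ connections, with $K=P_K(\mathbb{R}^d)$ where $P_K(z)=(a_{ij}\cdot z)_{ij}$, $a_{ij}\in\mathbb{R}^d$, is a linear isomorphism onto $K$. If $\dim\mathrm{Span}\{a_{i_0l}:l=1,\dots,n\}=2$ for some $i_0$, or $\dim\mathrm{Span}\{a_{lj_0}:l=1,\dots,m\}=2$ for some $j_0$, then there exists $\beta\in\mathbb{R}^{q_0}\setminus\{0\}$ with $\sum_{k=1}^{q_0}\beta_kM_k(X)\ge0$ for all $X\in K$ and $\sum_k\beta_kM_k\not\equiv0$ on $K$, where $M_1,\dots,M_{q_0}$ are all the $2\times2$ minors of $m\times n$ matrices.
   Context: A set has Rank-$1$ connections if it contains $A\ne B$ with $\mathrm{Rank}(A-B)=1$. *)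

(* Defs.v *)
From HB Require Import structures.
From mathcomp Require Import all_boot all_order all_algebra.
From mathcomp Require Export reals.
Set Implicit Arguments. Unset Strict Implicit. Unset Printing Implicit Defensive.
Import Order.TTheory GRing.Theory Num.Theory.
Local Open Scope ring_scope.

Definition PK (R : realType) (m n d : nat) (a : 'I_m -> 'I_n -> 'rV[R]_d)
  (z : 'rV[R]_d) : 'M[R]_(m, n) :=
  \matrix_(i < m, j < n) \sum_(k < d) a i j 0 k * z 0 k.

Definition minor_idx (m n : nat) :=
  {p : ('I_m * 'I_m) * ('I_n * 'I_n) | (p.1.1 < p.1.2)%N && (p.2.1 < p.2.2)%N}.

Definition minor (R : ringType) (m n : nat) (k : minor_idx m n)
  (X : 'M[R]_(m, n)) : R :=
  let: (i1, i2, (j1, j2)) := val k in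
  X i1 j1 * X i2 j2 - X i1 j2 * X i2 j1.

Definition no_rank1_connections (R : fieldType) (m n : nat)
  (K : 'M[R]_(m, n) -> Prop) : Prop :=
  forall A B, K A -> K B -> A <> B -> \rank (A - B) <> 1%N.

(* Main.v *)
Require Import Defs.
From HB Require Import structures.
From mathcomp Require Import all_boot all_order all_algebra reals.
From mathcomp Require Import polyrcf ring lra.
From Stdlib Require Import Classical.
Import Order.TTheory GRing.Theory Num.Theory.
Local Open Scope ring_scope.

Definition mn {R : realType} {m n} (X : 'M[R]_(m,n)) i i' j j' :=
  X i j * X i' j' - X i j' * X i' j.

Definition Repr {R : realType} {m n : nat} (f : 'M[R]_(m,n) -> R) :=
  exists beta : {ffun minor_idx m n -> R},
    forall X, f X = \sum_k beta k * minor k X.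

Lemma Repr_ext {R : realType} {m n} (f g : 'M[R]_(m,n) -> R) :
  Repr f -> (forall X, f X = g X) -> Repr g.
Proof. by move=> [b Hb] E; exists b => X; rewrite -E. Qed.
Tactic Notation "rext" uconstr(H) := eapply Repr_ext; [refine H|]; move=> X.

Lemma Repr0 {R : realType} {m n} : Repr (fun _ : 'M[R]_(m,n) => 0).
Proof. by exists 0 => X; rewrite big1 // => k _; rewrite ffunE mul0r. Qed.

Lemma ReprD {R : realType} {m n} {f g : 'M[R]_(m,n) -> R} :
  Repr f -> Repr g -> Repr (fun X => f X + g X).
Proof.
move=> [b Hb] [c Hc]; exists (b + c) => X; rewrite Hb Hc -big_split /=.
by apply: eq_bigr => k _; rewrite ffunE mulrDl.
Qed.

Lemma ReprZ {R : realType} {m n} (a : R) {f : 'M[R]_(m,n) -> R} :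
  Repr f -> Repr (fun X => a * f X).
Proof.
move=> [b Hb]; exists [ffun k => a * b k] => X; rewrite Hb mulr_sumr.
by apply: eq_bigr => k _; rewrite ffunE mulrA.
Qed.

Lemma Repr_sum {R : realType} {m n} (I : Type) (s : seq I)
  (F : I -> 'M[R]_(m,n) -> R) :
  (forall i, Repr (F i)) -> Repr (fun X => \sum_(i <- s) F i X).
Proof.
move=> H; elim: s => [|x s IH].
  by rext Repr0; rewrite big_nil.
by rext (ReprD (H x) IH); rewrite big_cons.
Qed.

Lemma Repr_minor {R : realType} {m n} (k : minor_idx m n) :
  Repr (@minor R m n k).
Proof.
exists [ffun k' => (k' == k)%:R] => X.
rewrite (bigD1 k) //= big1 ?addr0; first by rewrite ffunE eqxx mul1r.
by move=> k' /negPf nk; rewrite ffunE nk mul0r.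
Qed.

Lemma mn_swapr {R : realType} {m n} (X : 'M[R]_(m,n)) i i' j j' :
  mn X i i' j j' = - mn X i' i j j'.
Proof. rewrite /mn; ring. Qed.
Lemma mn_swapc {R : realType} {m n} (X : 'M[R]_(m,n)) i i' j j' :
  mn X i i' j j' = - mn X i i' j' j.
Proof. rewrite /mn; ring. Qed.
Lemma mn_eqr {R : realType} {m n} (X : 'M[R]_(m,n)) i j j' :
  mn X i i j j' = 0.
Proof. rewrite /mn; ring. Qed.
Lemma mn_eqc {R : realType} {m n} (X : 'M[R]_(m,n)) i i' j :
  mn X i i' j j = 0.
Proof. rewrite /mn; ring. Qed.

Lemma Repr_mn_lt {R : realType} {m n} (i i' : 'I_m) (j j' : 'I_n) :
  (i < i')%N -> (j < j')%N -> Repr (fun X : 'M[R]_(m,n) => mn X i i' j j').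
Proof.
move=> lti ltj.
have P : ((((i, i'), (j, j')).1.1 < ((i, i'), (j, j')).1.2)%N &&
          (((i, i'), (j, j')).2.1 < ((i, i'), (j, j')).2.2)%N) by rewrite /= lti ltj.
rext (Repr_minor (exist (fun p : ('I_m * 'I_m) * ('I_n * 'I_n) => (p.1.1 < p.1.2)%N && (p.2.1 < p.2.2)%N) _ P)).
by rewrite /minor /=.
Qed.

Lemma Repr_mn {R : realType} {m n} (i i' : 'I_m) (j j' : 'I_n) :
  Repr (fun X : 'M[R]_(m,n) => mn X i i' j j').
Proof.
have H1 : forall (i i' : 'I_m), (i < i')%N -> Repr (fun X : 'M[R]_(m,n) => mn X i i' j j').
  move=> a b ab; case: (ltngtP j j') => jj.
  - exact: Repr_mn_lt.
  - rext (ReprZ (-1) (Repr_mn_lt _ _ _ _ ab jj)).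
    by rewrite (mn_swapc X a b j j') mulN1r.
  - rext Repr0.
    by rewrite (val_inj jj) mn_eqc.
case: (ltngtP i i') => ii.
- exact: H1.
- rext (ReprZ (-1) (H1 _ _ ii)).
  by rewrite (mn_swapr X i i') mulN1r.
- rext Repr0.
  by rewrite (val_inj ii) mn_eqr.
Qed.

Lemma mn_mulmx {R : realType} {m n p} (M : 'M[R]_(m,n)) (T : 'M[R]_(n,p)) i i' j j' :
  mn (M *m T) i i' j j' =
  \sum_l \sum_l' (T l j * T l' j') * mn M i i' l l'.
Proof.
rewrite /mn !mxE.
have E1 : (\sum_l M i l * T l j) * (\sum_l' M i' l' * T l' j') =
   \sum_l \sum_l' (T l j * T l' j') * (M i l * M i' l').
  rewrite mulr_suml; apply: eq_bigr => l _; rewrite mulr_sumr; apply: eq_bigr => l' _; ring.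
have E2 : (\sum_l M i l * T l j') * (\sum_l' M i' l' * T l' j) =
   \sum_l \sum_l' (T l j * T l' j') * (M i l' * M i' l).
  rewrite mulr_suml exchange_big; apply: eq_bigr => l _; rewrite mulr_sumr; apply: eq_bigr => l' _; ring.
rewrite E1 E2 -sumrB; apply: eq_bigr => l _; rewrite -sumrB.
by apply: eq_bigr => l' _; rewrite mulrBr.
Qed.

Lemma Repr_minor_mulmx {R : realType} {m n p} (T : 'M[R]_(n,p)) (k : minor_idx m p) :
  Repr (fun M : 'M[R]_(m,n) => minor k (M *m T)).
Proof.
case: k => [[[i i'] [j j']] Pk].
have H : Repr (fun M : 'M[R]_(m,n) => \sum_l \sum_l' (T l j * T l' j') * mn M i i' l l').
  apply: Repr_sum => l; apply: Repr_sum => l'; apply: ReprZ; exact: Repr_mn.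
by rext H; rewrite /= -mn_mulmx.
Qed.

Lemma Repr_mulmx {R : realType} {m n p} (T : 'M[R]_(n,p)) (g : 'M[R]_(m,p) -> R) :
  Repr g -> Repr (fun M : 'M[R]_(m,n) => g (M *m T)).
Proof.
move=> [b Hb].
have H : Repr (fun M : 'M[R]_(m,n) => \sum_k b k * minor k (M *m T)).
  apply: Repr_sum => k; apply: ReprZ; exact: Repr_minor_mulmx.
by rext H; rewrite /= Hb.
Qed.

Lemma Repr_tr {R : realType} {m n} (g : 'M[R]_(n,m) -> R) :
  Repr g -> Repr (fun M : 'M[R]_(m,n) => g M^T).
Proof.
move=> [b Hb].
have H : Repr (fun M : 'M[R]_(m,n) => \sum_k b k * minor k M^T).
  apply: Repr_sum => k; apply: ReprZ.
  case: k => [[[j j'] [i i']] Pk].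
  by rext (Repr_mn i i' j j'); rewrite /minor /= /mn !mxE; ring.
by rext H; rewrite /= Hb.
Qed.

Lemma finish {R : realType} {m n d} (a : 'I_m -> 'I_n -> 'rV[R]_d) f :
  Repr f -> (forall z, 0 <= f (PK a z)) -> (exists z, f (PK a z) != 0) ->
  exists beta : {ffun minor_idx m n -> R},
    beta != 0 /\
    (forall z : 'rV[R]_d, 0 <= \sum_(k : minor_idx m n) beta k * minor k (PK a z)) /\
    (exists z : 'rV[R]_d, \sum_(k : minor_idx m n) beta k * minor k (PK a z) != 0).
Proof.
move=> [b Hb] Hpos [z Hz]; exists b; split; last split.
- apply/eqP => b0; move: Hz; rewrite Hb b0 big1 ?eqxx // => k _.
  by rewrite ffunE mul0r.
- by move=> z'; rewrite -Hb.
- by exists z; rewrite -Hb.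
Qed.

Definition factorable {R : realType} {m n} (X : 'M[R]_(m,n)) :=
  exists (u : 'I_m -> R) (r : 'I_n -> R), forall i j, X i j = u i * r j.

Definition Good {R : realType} {m n d} (Y : 'rV[R]_d -> 'M[R]_(m,n)) :=
  exists f, Repr f /\ (forall y, 0 <= f (Y y)) /\ exists y, f (Y y) != 0.

Definition Cm {R : realType} {m n d} (Y : 'rV[R]_d -> 'M[R]_(m,n)) (c : 'I_n)
  : 'M[R]_(m,d) := \matrix_(i, k) Y (delta_mx 0 k) i c.

Definition islin {R : realType} {m n d} (Y : 'rV[R]_d -> 'M[R]_(m,n)) :=
  forall y i j, Y y i j = \sum_k y 0 k * Y (delta_mx 0 k) i j.

Lemma Y_Cm {R : realType} {m n d} (Y : 'rV[R]_d -> 'M[R]_(m,n)) :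
  islin Y -> forall y i c, Y y i c = (Cm Y c *m y^T) i 0.
Proof.
move=> linY y i c; rewrite linY !mxE; apply: eq_bigr => k _; by rewrite !mxE mulrC.
Qed.

Lemma Dform {R : realType} {m n} (X : 'M[R]_(m,n)) (p q : 'I_m -> R) c c' :
  \sum_i \sum_i' (p i * q i') * mn X i i' c c' =
  (\sum_i p i * X i c) * (\sum_i q i * X i c') -
  (\sum_i p i * X i c') * (\sum_i q i * X i c).
Proof.
rewrite !mulr_suml -sumrB; apply: eq_bigr => i _.
rewrite !mulr_sumr -sumrB; apply: eq_bigr => i' _; rewrite /mn; ring.
Qed.

Lemma sum_Cm {R : realType} {m n d} (Y : 'rV[R]_d -> 'M[R]_(m,n)) :
  islin Y -> forall (p : 'rV[R]_m) y c,
  \sum_i p 0 i * Y y i c = (p *m Cm Y c *m y^T) 0 0.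
Proof.
move=> linY p y c; rewrite -mulmxA mxE; apply: eq_bigr => i _.
by rewrite (Y_Cm _ linY) !mxE.
Qed.

Lemma Repr_D {R : realType} {m n} (p q : 'I_m -> R) (c c' : 'I_n) :
  Repr (fun X : 'M[R]_(m,n) => \sum_i \sum_i' (p i * q i') * mn X i i' c c').
Proof.
apply: Repr_sum => i; apply: Repr_sum => i'; apply: ReprZ; exact: Repr_mn.
Qed.

Lemma vvT_neq0 {R : realType} {d} (v : 'rV[R]_d) : v != 0 -> (v *m v^T) 0 0 != 0.
Proof.
move=> nv; apply/negP => /eqP h; move/negP: nv; apply; apply/eqP.
apply/rowP => k; rewrite mxE.
move: h; rewrite mxE => /eqP; rewrite psumr_eq0; last first.
  by move=> l _; rewrite mxE -expr2 sqr_ge0.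
move/allP => /(_ k (mem_index_enum _)); rewrite mxE -expr2 sqrf_eq0 => /eqP //.
Qed.

Lemma QZ {R : realType} {m n d} (Y : 'rV[R]_d -> 'M[R]_(m,n)) (c0 c1 : 'I_n) :
  islin Y -> c0 != c1 ->
  (forall y i j, j != c0 -> j != c1 -> Y y i j = 0) ->
  (forall y, y != 0 -> ~ factorable (Y y)) ->
  Good Y \/ exists (Binv : 'M[R]_(d,m)) (F : 'M[R]_d),
     Binv *m Cm Y c0 = 1%:M /\ Cm Y c1 = Cm Y c0 *m F.
Proof.
move=> linY nc hz NR.
have rf : row_full (Cm Y c0).
  apply/negPn/negP => nrf.
  have : kermx (Cm Y c0)^T != 0.
    by rewrite kermx_eq0 /row_free mxrank_tr.
  move/rowV0Pn => [v /sub_kermxP vk nv].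
  apply: (NR v nv); exists (fun i => Y v i c1), (fun j => (j == c1)%:R) => i j.
  case: (eqVneq j c1) => [->|jc1]; first by rewrite mulr1.
  rewrite mulr0; case: (eqVneq j c0) => [->|jc0]; last by rewrite hz.
  have e : Cm Y c0 *m v^T = 0.
    by rewrite -[Cm Y c0]trmxK -trmx_mul vk trmx0.
  by rewrite (Y_Cm _ linY) e mxE.
have [Binv hB] := row_fullP rf.
case: (classic (exists rho : 'rV_m, rho *m Cm Y c0 = 0 /\ rho *m Cm Y c1 != 0))
   => [[rho [r0 r1]]|H].
  left; set l := rho *m Cm Y c1; set s := l *m Binv.
  have sC : s *m Cm Y c0 = l by rewrite /s -mulmxA hB mulmx1.
  exists (fun X => \sum_i \sum_i' (s 0 i * rho 0 i') * mn X i i' c0 c1).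
  have ev : forall y, \sum_i \sum_i' (s 0 i * rho 0 i') * mn (Y y) i i' c0 c1
                      = ((l *m y^T) 0 0) ^+ 2.
    move=> y; rewrite Dform !(sum_Cm _ linY) sC r0 mul0mx.
    have z0 : (0 : 'M[R]_(1,1)) 0 0 = 0 by rewrite mxE.
    by rewrite z0 mulr0 subr0 -/l expr2.
  split; first exact: Repr_D.
  split; first by move=> y; rewrite ev sqr_ge0.
  by exists l; rewrite ev sqrf_eq0 vvT_neq0.
right; exists Binv, (Binv *m Cm Y c1); split => //.
set P := 1%:M - Cm Y c0 *m Binv.
have PC0 : P *m Cm Y c0 = 0 by rewrite mulmxBl mul1mx -mulmxA hB mulmx1 subrr.
have PC1 : P *m Cm Y c1 = 0.
  apply/row_matrixP => i; rewrite row_mul row0.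
  apply/eqP; apply/negPn/negP => hne; apply: H; exists (row i P); split => //.
  by rewrite -row_mul PC0 row0.
by move/eqP: PC1; rewrite mulmxBl mul1mx subr_eq0 -mulmxA => /eqP.
Qed.

Lemma eig_contra {R : realType} {m n d} (Y : 'rV[R]_d -> 'M[R]_(m,n)) (c0 c1 : 'I_n) F :
  islin Y -> c0 != c1 ->
  (forall y i j, j != c0 -> j != c1 -> Y y i j = 0) ->
  (forall y, y != 0 -> ~ factorable (Y y)) ->
  Cm Y c1 = Cm Y c0 *m F ->
  forall (x : 'rV[R]_d) mu, x != 0 -> x *m F^T = mu *: x -> False.
Proof.
move=> linY nc hz NR hF x mu nx hx.
apply: (NR x nx); exists (fun i => Y x i c0),
  (fun j => (j == c0)%:R + mu * (j == c1)%:R) => i j.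
case: (eqVneq j c0) => [->|jc0].
  by rewrite (negPf nc) mulr0 addr0 mulr1.
case: (eqVneq j c1) => [->|jc1]; last by rewrite hz // mulr0 add0r mulr0.
rewrite add0r mulr1 !(Y_Cm _ linY) hF -mulmxA.
have -> : F *m x^T = mu *: x^T by rewrite -[F]trmxK -trmx_mul hx linearZ.
by rewrite -scalemxAr mxE mulrC.
Qed.
Arguments QZ {R m n d Y c0 c1}.
Arguments eig_contra {R m n d Y c0 c1 F}.

Lemma QZ3 {R : realType} {m n} (Y : 'rV[R]_3 -> 'M[R]_(m,n)) (c0 c1 : 'I_n) :
  islin Y -> c0 != c1 ->
  (forall y i j, j != c0 -> j != c1 -> Y y i j = 0) ->
  (forall y, y != 0 -> ~ factorable (Y y)) -> Good Y.
Proof.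
move=> linY nc hz NR.
case: (QZ linY nc hz NR) => [//|[Binv [F [hB hF]]]].
have sz : ~~ odd (size (char_poly F^T)) by rewrite size_char_poly.
have [mu hmu] := odd_poly_root sz.
have : eigenvalue F^T mu by rewrite eigenvalue_root_char.
move/eigenvalueP => [v hv nv].
by case: (eig_contra linY nc hz NR hF _ _ nv hv).
Qed.

Lemma sum_CmM {R : realType} {m n d p} (Y : 'rV[R]_d -> 'M[R]_(m,n)) :
  islin Y -> forall (M : 'M[R]_(p,m)) k y c,
  \sum_i M k i * Y y i c = (M *m Cm Y c *m y^T) k 0.
Proof.
move=> linY M k y c; rewrite -mulmxA mxE; apply: eq_bigr => i _.
by rewrite (Y_Cm _ linY) !mxE.
Qed.

Definition o20 : 'I_2 := ord0.
Definition o21 : 'I_2 := lift ord0 ord0.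
Definition mk2 {R : realType} (a b : R) : 'rV[R]_2 := \row_(k < 2) [:: a; b]`_k.

Lemma mk2_0 {R : realType} (a b : R) : mk2 a b 0 o20 = a. Proof. by rewrite mxE. Qed.
Lemma mk2_1 {R : realType} (a b : R) : mk2 a b 0 o21 = b. Proof. by rewrite mxE. Qed.
Lemma ord2_cases (k : 'I_2) : k = o20 \/ k = o21.
Proof. case: k => [[|[|k]] hk]; [left|right|by []]; exact: val_inj. Qed.
Lemma sum2 {R : realType} (F : 'I_2 -> R) : \sum_k F k = F o20 + F o21.
Proof. by rewrite !big_ord_recl big_ord0 addr0. Qed.
Lemma mk2_neq0 {R : realType} (a b : R) : a != 0 \/ b != 0 -> mk2 a b != 0.
Proof.
move=> h; apply/eqP => e; case: h => /eqP; apply.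
  by have := congr1 (fun M : 'rV[R]_2 => M 0 o20) e; rewrite mk2_0 mxE.
by have := congr1 (fun M : 'rV[R]_2 => M 0 o21) e; rewrite mk2_1 mxE.
Qed.

Lemma eig2 {R : realType} (F : 'M[R]_2) x0 x1 mu :
  F o20 o20 * x0 + F o20 o21 * x1 = mu * x0 ->
  F o21 o20 * x0 + F o21 o21 * x1 = mu * x1 ->
  mk2 x0 x1 *m F^T = mu *: mk2 x0 x1.
Proof.
move=> e0 e1; apply/rowP => k; rewrite /mk2.
by case: (ord2_cases k) => ->; rewrite !mxE sum2 !mxE /=;
  [rewrite -e0|rewrite -e1]; ring.
Qed.

Lemma QZ2 {R : realType} {m n} (Y : 'rV[R]_2 -> 'M[R]_(m,n)) (c0 c1 : 'I_n) :
  islin Y -> c0 != c1 ->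
  (forall y i j, j != c0 -> j != c1 -> Y y i j = 0) ->
  (forall y, y != 0 -> ~ factorable (Y y)) -> Good Y.
Proof.
move=> linY nc hz NR.
case: (QZ linY nc hz NR) => [//|[Binv [F [hB hF]]]].
have ev : forall y, \sum_i \sum_i' (Binv o20 i * Binv o21 i') * mn (Y y) i i' c0 c1 =
  y 0 o20 * (F o21 o20 * y 0 o20 + F o21 o21 * y 0 o21)
  - (F o20 o20 * y 0 o20 + F o20 o21 * y 0 o21) * y 0 o21.
  move=> y; rewrite Dform !(sum_CmM _ linY) hF mulmxA hB mul1mx.
  by rewrite mul1mx !mxE !sum2 !mxE.
set a := F o21 o20; set bb := F o21 o21 - F o20 o20; set c := - F o20 o21.
have eD : forall y0 y1, y0 * (F o21 o20 * y0 + F o21 o21 * y1)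
  - (F o20 o20 * y0 + F o20 o21 * y1) * y1 = a * y0 ^+ 2 + bb * y0 * y1 + c * y1 ^+ 2.
  by move=> y0 y1; rewrite /a /bb /c; ring.
have contra : forall x0 x1, (x0 != 0 \/ x1 != 0) ->
    a * x0 ^+ 2 + bb * x0 * x1 + c * x1 ^+ 2 = 0 -> False.
  move=> x0 x1 nz hD.
  have hD' : x0 * (F o21 o20 * x0 + F o21 o21 * x1) = (F o20 o20 * x0 + F o20 o21 * x1) * x1.
    by apply/eqP; rewrite -subr_eq0 eD hD.
  case: (eqVneq x1 0) => [x10|x1n0].
    case: nz => [x0n0|]; last by rewrite x10 eqxx.
    have a0 : a = 0.
      move: hD; rewrite x10 expr0n /= mulr0 mulr0 !addr0 => /eqP.
      by rewrite mulf_eq0 expf_eq0 (negPf x0n0) andbF orbF => /eqP.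
    have E : mk2 x0 x1 *m F^T = F o20 o20 *: mk2 x0 x1.
      apply: eig2.
      - by rewrite x10 mulr0 addr0 mulrC.
      - by rewrite x10 !mulr0 addr0 -/a a0 mul0r.
    exact: (eig_contra linY nc hz NR hF _ _ (mk2_neq0 _ _ (or_introl x0n0)) E).
  set mu := (F o21 o20 * x0 + F o21 o21 * x1) / x1.
  have e1 : F o21 o20 * x0 + F o21 o21 * x1 = mu * x1 by rewrite /mu divfK.
  have E : mk2 x0 x1 *m F^T = mu *: mk2 x0 x1.
    apply: eig2; last exact: e1.
    by apply: (mulIf x1n0); rewrite -hD' e1; ring.
  exact: (eig_contra linY nc hz NR hF _ _ (mk2_neq0 _ _ (or_intror x1n0)) E).
case: (eqVneq a 0) => a0.
  by exfalso; apply: (contra 1 0 (or_introl (oner_neq0 R))); rewrite a0; ring.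
set disc := bb ^+ 2 - 4 * a * c.
case: (lerP 0 disc) => hd.
  exfalso; set s := Num.sqrt disc; set x0 := (- bb + s) / (2 * a).
  apply: (contra x0 1 (or_intror (oner_neq0 R))).
  have hs : s ^+ 2 = disc by rewrite /s sqr_sqrtr.
  have -> : a * x0 ^+ 2 + bb * x0 * 1 + c * 1 ^+ 2 = (s ^+ 2 - disc) / (4 * a).
    rewrite /x0 /disc; field.
    by [].
  by rewrite hs subrr mul0r.
exists (fun X => a * \sum_i \sum_i' (Binv o20 i * Binv o21 i') * mn X i i' c0 c1).
split; first exact: (ReprZ a (Repr_D _ _ c0 c1)).
split.
  move=> y; rewrite ev eD.
  have h1 := sqr_ge0 (2 * a * y 0 o20 + bb * y 0 o21).
  have h2 : 0 <= - disc * y 0 o21 ^+ 2 by rewrite mulr_ge0 ?sqr_ge0 // oppr_ge0 ltW.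
  have e : 4 * (a * (a * y 0 o20 ^+ 2 + bb * y 0 o20 * y 0 o21 + c * y 0 o21 ^+ 2))
    = (2 * a * y 0 o20 + bb * y 0 o21) ^+ 2 + - disc * y 0 o21 ^+ 2 by rewrite /disc; ring.
  lra.
exists (mk2 1 0); rewrite ev eD mk2_0 mk2_1.
have -> : a * (a * 1 ^+ 2 + bb * 1 * 0 + c * 0 ^+ 2) = a * a by ring.
by rewrite mulf_neq0.
Qed.
Arguments QZ2 {R m n Y c0 c1}.
Arguments QZ3 {R m n Y c0 c1}.

Lemma sos2_neq0 {R : realType} (a b : R) : a != 0 \/ b != 0 -> a ^+ 2 + b ^+ 2 != 0.
Proof.
have h : forall x : R, x != 0 -> 0 < x ^+ 2.
  by move=> x nx; rewrite lt0r sqrf_eq0 nx sqr_ge0.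
case=> [/h ha|/h hb]; apply: lt0r_neq0.
  by have := sqr_ge0 b; lra.
by have := sqr_ge0 a; lra.
Qed.

Lemma Core2 {R : realType} {m n} (Y : 'rV[R]_2 -> 'M[R]_(m,n)) i0 c0 c1 :
  islin Y -> c0 != c1 ->
  (forall y, Y y i0 c0 = y 0 o20) -> (forall y, Y y i0 c1 = y 0 o21) ->
  (forall y j, j != c0 -> j != c1 -> Y y i0 j = 0) ->
  (forall y, y != 0 -> ~ factorable (Y y)) -> Good Y.
Proof.
move=> linY nc hr0 hr1 hrz NR.
pose b0 i j := Y (delta_mx 0 o20) i j.
pose b1 i j := Y (delta_mx 0 o21) i j.
have lin2 : forall y i j, Y y i j = y 0 o20 * b0 i j + y 0 o21 * b1 i j.
  by move=> y i j; rewrite linY sum2.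
case: (classic (exists i j, i != i0 /\ j != c0 /\ j != c1 /\
                 (b0 i j != 0 \/ b1 i j != 0))) => [[i [j [hi [hj0 [hj1 nz]]]]]|H].
  pose p := b0 i j; pose q := b1 i j.
  exists (fun X => p * mn X i0 i c0 j + q * mn X i0 i c1 j).
  have ev : forall y, p * mn (Y y) i0 i c0 j + q * mn (Y y) i0 i c1 j
              = (p * y 0 o20 + q * y 0 o21) ^+ 2.
    move=> y; rewrite /mn hr0 hr1 hrz // (lin2 y i j) -/p -/q; ring.
  split; first by apply: ReprD; apply: ReprZ; apply: Repr_mn.
  split; first by move=> y; rewrite ev sqr_ge0.
  exists (mk2 p q); rewrite ev mk2_0 mk2_1 sqrf_eq0 -!expr2.
  exact: sos2_neq0.
apply: (QZ2 linY nc _ NR) => y i j hj0 hj1.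
case: (eqVneq i i0) => [->|hi]; first exact: hrz.
rewrite lin2.
have [-> ->] : b0 i j = 0 /\ b1 i j = 0.
  split; apply/eqP; apply/negPn/negP => nz; apply: H; exists i, j; tauto.
by rewrite !mulr0 addr0.
Qed.

Definition o30 : 'I_3 := ord0.
Definition o31 : 'I_3 := lift ord0 ord0.
Definition o32 : 'I_3 := lift ord0 (lift ord0 ord0).
Definition mk3 {R : realType} (a b c : R) : 'rV[R]_3 := \row_(k < 3) [:: a; b; c]`_k.
Lemma mk3_0 {R : realType} (a b c : R) : mk3 a b c 0 o30 = a. Proof. by rewrite mxE. Qed.
Lemma mk3_1 {R : realType} (a b c : R) : mk3 a b c 0 o31 = b. Proof. by rewrite mxE. Qed.
Lemma mk3_2 {R : realType} (a b c : R) : mk3 a b c 0 o32 = c. Proof. by rewrite mxE. Qed.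
Lemma sum3 {R : realType} (F : 'I_3 -> R) : \sum_k F k = F o30 + F o31 + F o32.
Proof. by rewrite !big_ord_recl big_ord0 addr0 addrA. Qed.
Lemma mk3_neq0 {R : realType} (a b c : R) : a != 0 \/ b != 0 -> mk3 a b c != 0.
Proof.
move=> h; apply/eqP => e; case: h => /eqP; apply.
  by have := congr1 (fun M : 'rV[R]_3 => M 0 o30) e; rewrite mk3_0 mxE.
by have := congr1 (fun M : 'rV[R]_3 => M 0 o31) e; rewrite mk3_1 mxE.
Qed.
Lemma e2_neq0 {R : realType} : (delta_mx 0 o32 : 'rV[R]_3) != 0.
Proof.
apply/eqP => e; have := congr1 (fun M : 'rV[R]_3 => M 0 o32) e.
by rewrite !mxE /= => /eqP; rewrite oner_eq0.
Qed.
Lemma e2_0 {R : realType} : (delta_mx 0 o32 : 'rV[R]_3) 0 o30 = 0.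
Proof. by rewrite mxE. Qed.
Lemma e2_1 {R : realType} : (delta_mx 0 o32 : 'rV[R]_3) 0 o31 = 0.
Proof. by rewrite mxE. Qed.

Lemma Core3 {R : realType} {m n} (Y : 'rV[R]_3 -> 'M[R]_(m,n)) i0 c0 c1 :
  islin Y -> c0 != c1 ->
  (forall y, Y y i0 c0 = y 0 o30) -> (forall y, Y y i0 c1 = y 0 o31) ->
  (forall y j, j != c0 -> j != c1 -> Y y i0 j = 0) ->
  (forall y, y != 0 -> ~ factorable (Y y)) -> Good Y.
Proof.
move=> linY nc hr0 hr1 hrz NR.
pose b0 i j := Y (delta_mx 0 o30) i j.
pose b1 i j := Y (delta_mx 0 o31) i j.
pose b2 i j := Y (delta_mx 0 o32) i j.
have lin3 : forall y i j, Y y i j = y 0 o30 * b0 i j + y 0 o31 * b1 i j + y 0 o32 * b2 i j.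
  by move=> y i j; rewrite linY sum3.
pose off i j := i != i0 /\ j != c0 /\ j != c1.
case: (classic (exists i j i' j' s s', off i j /\ off i' j' /\
         s * b2 i j + s' * b2 i' j' = 0 /\
         (s * b0 i j + s' * b0 i' j' != 0 \/ s * b1 i j + s' * b1 i' j' != 0)))
   => [[i [j [i' [j' [s [s' [[hi [hj0 hj1]] [[hi' [hj0' hj1']] [hs nz]]]]]]]]]|H1].
  pose l0 := s * b0 i j + s' * b0 i' j'; pose l1 := s * b1 i j + s' * b1 i' j'.
  exists (fun X => l0 * (s * mn X i0 i c0 j + s' * mn X i0 i' c0 j') +
                   l1 * (s * mn X i0 i c1 j + s' * mn X i0 i' c1 j')).
  have key : forall y, s * Y y i j + s' * Y y i' j' = l0 * y 0 o30 + l1 * y 0 o31.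
    move=> y; rewrite (lin3 y i j) (lin3 y i' j').
    transitivity (l0 * y 0 o30 + l1 * y 0 o31 + y 0 o32 * (s * b2 i j + s' * b2 i' j')).
      by rewrite /l0 /l1; ring.
    by rewrite hs mulr0 addr0.
  have ev : forall y, l0 * (s * mn (Y y) i0 i c0 j + s' * mn (Y y) i0 i' c0 j') +
                   l1 * (s * mn (Y y) i0 i c1 j + s' * mn (Y y) i0 i' c1 j')
              = (l0 * y 0 o30 + l1 * y 0 o31) ^+ 2.
    move=> y; rewrite /mn !hr0 !hr1 (hrz y j) // (hrz y j') //.
    transitivity ((l0 * y 0 o30 + l1 * y 0 o31) * (s * Y y i j + s' * Y y i' j')).
      ring.
    by rewrite key expr2.
  split.
    apply: ReprD; apply: ReprZ; apply: ReprD; apply: ReprZ; apply: Repr_mn.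
  split; first by move=> y; rewrite ev sqr_ge0.
  exists (mk3 l0 l1 0); rewrite ev mk3_0 mk3_1 sqrf_eq0 -!expr2.
  exact: sos2_neq0.
have HA : forall i j, off i j -> b2 i j = 0 -> b0 i j = 0 /\ b1 i j = 0.
  move=> i j hij h2; split; apply/eqP; apply/negPn/negP => nz; apply: H1;
  exists i, j, i, j, 1, 0; rewrite h2; split => //; split => //;
  (split; first by rewrite !mul0r !mulr0 addr0);
  by rewrite !mul1r !mul0r !addr0; tauto.
have HB : forall i j i' j', off i j -> off i' j' ->
    b2 i' j' * b0 i j = b2 i j * b0 i' j' /\ b2 i' j' * b1 i j = b2 i j * b1 i' j'.
  move=> i j i' j' hij hij'; split; apply/eqP; rewrite -subr_eq0;
  apply/negPn/negP => nz; apply: H1;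
  exists i, j, i', j', (b2 i' j'), (- b2 i j); split => //; split => //;
  (split; first by ring);
  by rewrite !mulNr; tauto.
case: (classic (exists i1 j1, off i1 j1 /\ b2 i1 j1 != 0)) => [[i1 [j1 [h1 g1n0]]]|H2]; last first.
  apply: (QZ3 linY nc _ NR) => y i j hj0 hj1.
  case: (eqVneq i i0) => [->|hi]; first exact: hrz.
  have hij : off i j by [].
  have h2 : b2 i j = 0.
    by apply/eqP; apply/negPn/negP => nz; apply: H2; exists i, j.
  have [h0 h1] := HA i j hij h2.
  by rewrite lin3 h0 h1 h2 !mulr0 !addr0.
have KR : forall i j y, off i j -> b2 i1 j1 * Y y i j = b2 i j * Y y i1 j1.
  move=> i j y hij; have [e0 e1] := HB i1 j1 i j h1 hij.
  rewrite !lin3.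
  transitivity (y 0 o30 * (b2 i1 j1 * b0 i j) + y 0 o31 * (b2 i1 j1 * b1 i j)
     + y 0 o32 * (b2 i1 j1 * b2 i j)); first ring.
  by rewrite -e0 -e1; ring.
have KRd : forall i j y, off i j -> Y y i j = b2 i j * Y y i1 j1 / b2 i1 j1.
  by move=> i j y hij; rewrite -KR // mulrC mulKf.
have g2 : 0 < b2 i1 j1 ^+ 2 by rewrite lt0r sqrf_eq0 g1n0 sqr_ge0.
have hi1 : i1 != i0 by case: h1.
have hj1 : (j1 != c0) /\ (j1 != c1) by case: h1.
case: (classic (exists i j, off i j /\
          b2 i1 j1 * b2 i j - b2 i1 j * b2 i j1 != 0)) => [[i [j [hij nk]]]|H3].
  pose k := b2 i1 j1 * b2 i j - b2 i1 j * b2 i j1.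
  have hi : i != i0 by case: hij.
  have hj : (j != c0) /\ (j != c1) by case: hij.
  exists (fun X => k * mn X i1 i j1 j).
  have ev : forall y, b2 i1 j1 ^+ 2 * (k * mn (Y y) i1 i j1 j) = k ^+ 2 * Y y i1 j1 ^+ 2.
    move=> y.
    transitivity (k * (Y y i1 j1 * (b2 i1 j1 * Y y i j) * b2 i1 j1
              - (b2 i1 j1 * Y y i1 j) * (b2 i1 j1 * Y y i j1))).
      by rewrite /mn; ring.
    have o2 : off i1 j by split.
    have o3 : off i j1 by split.
    rewrite (KR i j y hij) (KR i1 j y o2) (KR i j1 y o3).
    by rewrite /k; ring.
  split; first by apply: ReprZ; apply: Repr_mn.
  split.
    move=> y; rewrite -(pmulr_rge0 _ g2) ev.
    by rewrite mulr_ge0 ?sqr_ge0.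
  exists (delta_mx 0 o32); apply/eqP => e.
  have := ev (delta_mx 0 o32); rewrite e mulr0 => /esym/eqP.
  by rewrite mulf_eq0 !sqrf_eq0 (negPf nk) (negPf g1n0).
have C3 : forall i j, off i j -> b2 i1 j1 * b2 i j = b2 i1 j * b2 i j1.
  move=> i j hij; apply/eqP; rewrite -subr_eq0; apply/negPn/negP => nz.
  by apply: H3; exists i, j.
have hz0 : forall y, Y y i0 j1 = 0 by move=> y; apply: hrz; case: hj1.
case: (classic (exists i kk, i != i0 /\ (kk = c0 \/ kk = c1) /\
          b2 i1 j1 * b2 i kk - b2 i j1 * b2 i1 kk != 0)) => [[i [kk [hi [hkk nh]]]]|H4].
  pose q2 := b2 i1 j1 * b2 i kk - b2 i j1 * b2 i1 kk.
  pose q0 := b2 i1 j1 * b0 i kk - b2 i j1 * b0 i1 kk.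
  pose q1 := b2 i1 j1 * b1 i kk - b2 i j1 * b1 i1 kk.
  have o3 : off i j1 by split; [|case: hj1].
  exists (fun X => q2 * (b2 i1 j1 ^+ 2 * mn X i i1 kk j1
                 - (b2 i1 j1 * q0 - q2 * b0 i1 j1) * mn X i0 i1 c0 j1
                 - (b2 i1 j1 * q1 - q2 * b1 i1 j1) * mn X i0 i1 c1 j1)).
  have ev : forall y, q2 * (b2 i1 j1 ^+ 2 * mn (Y y) i i1 kk j1
                 - (b2 i1 j1 * q0 - q2 * b0 i1 j1) * mn (Y y) i0 i1 c0 j1
                 - (b2 i1 j1 * q1 - q2 * b1 i1 j1) * mn (Y y) i0 i1 c1 j1)
            = q2 ^+ 2 * Y y i1 j1 ^+ 2.
    move=> y; rewrite /mn hr0 hr1 hz0 (KRd i j1 y o3).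
    rewrite (lin3 y i kk) (lin3 y i1 kk) (lin3 y i1 j1) /q0 /q1 /q2.
    by field.
  split.
    have Hr := ReprZ q2 (ReprD (ReprD (ReprZ (b2 i1 j1 ^+ 2) (Repr_mn i i1 kk j1))
       (ReprZ (- (b2 i1 j1 * q0 - q2 * b0 i1 j1)) (Repr_mn i0 i1 c0 j1)))
       (ReprZ (- (b2 i1 j1 * q1 - q2 * b1 i1 j1)) (Repr_mn i0 i1 c1 j1))).
    by rext Hr; rewrite /=; ring.
  split; first by move=> y; rewrite ev mulr_ge0 ?sqr_ge0.
  exists (delta_mx 0 o32); rewrite ev.
  by rewrite mulf_neq0 // sqrf_eq0.
have C3b : forall i kk, i != i0 -> (kk = c0 \/ kk = c1) ->
    b2 i1 j1 * b2 i kk = b2 i j1 * b2 i1 kk.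
  move=> i kk hi hkk; apply/eqP; rewrite -subr_eq0; apply/negPn/negP => nz.
  by apply: H4; exists i, kk.
exfalso; apply: (NR _ e2_neq0).
exists (fun i => if i == i0 then 0 else b2 i j1 / b2 i1 j1), (fun j => b2 i1 j) => i j.
case: (eqVneq i i0) => [->|hi].
  rewrite mul0r.
  case: (eqVneq j c0) => [->|jc0]; first by rewrite hr0 e2_0.
  case: (eqVneq j c1) => [->|jc1]; first by rewrite hr1 e2_1.
  by rewrite hrz.
have E : b2 i1 j1 * b2 i j = b2 i j1 * b2 i1 j.
  case: (eqVneq j c0) => [->|jc0]; first by apply: C3b => //; left.
  case: (eqVneq j c1) => [->|jc1]; first by apply: C3b => //; right.
  by rewrite C3 // mulrC.
apply: (mulfI g1n0); rewrite -/(b2 i j) E; field; done.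
Qed.

Lemma lin_islin {R : realType} {m n d} (Y : 'rV[R]_d -> 'M[R]_(m,n)) :
  (forall u v, Y (u + v) = Y u + Y v) -> (forall c u, Y (c *: u) = c *: Y u) ->
  islin Y.
Proof.
move=> hD hZ.
have h0 : Y 0 = 0 by rewrite -(scale0r 0) hZ scale0r.
have hs : forall (y : 'rV[R]_d) (s : seq 'I_d),
    Y (\sum_(k <- s) y 0 k *: delta_mx 0 k) = \sum_(k <- s) y 0 k *: Y (delta_mx 0 k).
  move=> y; elim=> [|k s IH]; first by rewrite !big_nil.
  by rewrite !big_cons hD hZ IH.
move=> y i j; rewrite {1}(row_sum_delta y) hs summxE.
by apply: eq_bigr => k _; rewrite mxE.
Qed.

Lemma PK_add {R : realType} {m n d} (a : 'I_m -> 'I_n -> 'rV[R]_d) u v :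
  PK a (u + v) = PK a u + PK a v.
Proof.
apply/matrixP => i j; rewrite !mxE -big_split; apply: eq_bigr => k _.
by rewrite mxE mulrDr.
Qed.

Lemma PK_scale {R : realType} {m n d} (a : 'I_m -> 'I_n -> 'rV[R]_d) c u :
  PK a (c *: u) = c *: PK a u.
Proof.
apply/matrixP => i j; rewrite !mxE mulr_sumr; apply: eq_bigr => k _.
by rewrite mxE mulrCA.
Qed.

Lemma PK0 {R : realType} {m n d} (a : 'I_m -> 'I_n -> 'rV[R]_d) : PK a 0 = 0.
Proof. by rewrite -(scale0r 0) PK_scale scale0r. Qed.

Lemma factor_rank {R : realType} {m n} (X : 'M[R]_(m,n)) :
  factorable X -> (\rank X <= 1)%N.
Proof.
move=> [u [r hX]].
have -> : X = (\col_i u i) *m (\row_j r j).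
  by apply/matrixP => i j; rewrite hX mxE big_ord1 !mxE.
by apply: leq_trans (mxrankM_maxl _ _) (rank_leq_col _).
Qed.

Lemma row_reduce {R : realType} {m n d} (a : 'I_m -> 'I_n -> 'rV[R]_d) (i0 : 'I_m) :
  injective (PK a) ->
  no_rank1_connections (fun X => exists z, X = PK a z) ->
  \rank (\matrix_(l < n) a i0 l) = 2%N ->
  (forall Y : 'rV[R]_d -> 'M[R]_(m,n), islin Y ->
     (forall y, y != 0 -> ~ factorable (Y y)) ->
     (forall y j, Y y i0 j = (y *m pid_mx 2) 0 j) -> Good Y) ->
  exists f, Repr f /\ (forall z, 0 <= f (PK a z)) /\ exists z, f (PK a z) != 0.
Proof.
move=> inj nr1 rk HG.
set A0 := \matrix_(l < n) a i0 l.
set L := col_ebase A0^T; set U := row_ebase A0^T.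
have eA : L *m pid_mx 2 *m U = A0^T by rewrite -rk -mxrank_tr mulmx_ebase.
pose G := invmx L; pose T := invmx U.
pose Y := fun y : 'rV[R]_d => PK a (y *m G) *m T.
have linY : islin Y.
  apply: lin_islin => [u v|c u]; rewrite /Y.
    by rewrite mulmxDl PK_add mulmxDl.
  by rewrite -scalemxAl PK_scale -scalemxAl.
have NRY : forall y, y != 0 -> ~ factorable (Y y).
  move=> y ny [u [r hf]].
  set z := y *m G.
  have nz : z != 0.
    apply: contra ny => /eqP z0; apply/eqP.
    by rewrite -(mulmxKV (col_ebase_unit A0^T) y) -/G -/z z0 mul0mx.
  have fX : factorable (PK a z).
    exists u, (fun j => \sum_l r l * U l j) => i j.
    have -> : PK a z = Y y *m U by rewrite /Y mulmxKV ?row_ebase_unit.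
    rewrite mxE mulr_sumr; apply: eq_bigr => l _; by rewrite hf mulrA.
  have Xn0 : PK a z != 0.
    by apply: contra nz => /eqP h; apply/eqP; apply: inj; rewrite h PK0.
  apply: (nr1 (PK a z) (PK a 0)); [by exists z|by exists 0|..].
    by move=> h; move/eqP: Xn0; apply; rewrite h PK0.
  rewrite PK0 subr0; apply/eqP; rewrite eqn_leq factor_rank //=.
  by rewrite lt0n mxrank_eq0.
have rowY : forall y j, Y y i0 j = (y *m pid_mx 2) 0 j.
  move=> y j.
  have e1 : forall z : 'rV[R]_d, forall l, PK a z i0 l = (z *m A0^T) 0 l.
    move=> z l; rewrite !mxE; apply: eq_bigr => k _; by rewrite !mxE mulrC.
  have e2 : Y y i0 j = (y *m G *m A0^T *m T) 0 j.
    rewrite /Y mxE [in RHS]mxE; apply: eq_bigr => l _; by rewrite e1.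
  rewrite e2 -eA /G /T !mulmxA mulmxK ?row_ebase_unit //.
  by rewrite -!mulmxA mulKmx ?col_ebase_unit.
have [f [Rf [fpos [y fnz]]]] := HG Y linY NRY rowY.
exists (fun X => f (X *m T)); split; first exact: Repr_mulmx.
split.
  move=> z; have := fpos (z *m L); rewrite /Y mulmxK ?col_ebase_unit //.
exists (y *m G); exact: fnz.
Qed.

Lemma pid2 {R : realType} {n} (y : 'rV[R]_2) (j : 'I_n) :
  (y *m pid_mx 2) 0 j =
  if (val j == 0)%N then y 0 o20 else if (val j == 1)%N then y 0 o21 else 0.
Proof.
case: j => [[|[|jj]] hj]; rewrite mxE sum2 !mxE /=.
- by rewrite mulr1 mulr0 addr0.
- by rewrite mulr1 mulr0 add0r.
- by rewrite !mulr0 addr0.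
Qed.

Lemma pid3 {R : realType} {n} (y : 'rV[R]_3) (j : 'I_n) :
  (y *m pid_mx 2) 0 j =
  if (val j == 0)%N then y 0 o30 else if (val j == 1)%N then y 0 o31 else 0.
Proof.
case: j => [[|[|jj]] hj]; rewrite mxE sum3 !mxE /=.
- by rewrite mulr1 !mulr0 !addr0.
- by rewrite mulr1 !mulr0 add0r addr0.
- have -> : (bump 0 (bump 0 0) < 2)%N = false by [].
  by rewrite andbF !mulr0 !addr0.
Qed.

Lemma row_main {R : realType} {m n d} (a : 'I_m -> 'I_n -> 'rV[R]_d) (i0 : 'I_m) :
  (d = 2 \/ d = 3)%N ->
  injective (PK a) ->
  no_rank1_connections (fun X => exists z, X = PK a z) ->
  \rank (\matrix_(l < n) a i0 l) = 2%N ->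
  exists f, Repr f /\ (forall z, 0 <= f (PK a z)) /\ exists z, f (PK a z) != 0.
Proof.
move=> hd inj nr1 rk.
have n2 : (1 < n)%N by rewrite -rk rank_leq_row.
pose c0 : 'I_n := Ordinal (ltnW n2); pose c1 : 'I_n := Ordinal n2.
have nc : c0 != c1 by [].
have vj : forall j : 'I_n, j != c0 -> (val j == 0)%N = false.
  by move=> j; apply: contraNF => /eqP h; apply/eqP/val_inj.
have vj1 : forall j : 'I_n, j != c1 -> (val j == 1)%N = false.
  by move=> j; apply: contraNF => /eqP h; apply/eqP/val_inj.
case: hd => hd; subst d; apply: (row_reduce a i0 inj nr1 rk) => Y linY NRY rowY.
- apply: (Core2 Y i0 c0 c1 linY nc _ _ _ NRY).
  + by move=> y; rewrite rowY pid2.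
  + by move=> y; rewrite rowY pid2.
  + by move=> y j h0 h1; rewrite rowY pid2 vj // vj1.
- apply: (Core3 Y i0 c0 c1 linY nc _ _ _ NRY).
  + by move=> y; rewrite rowY pid3.
  + by move=> y; rewrite rowY pid3.
  + by move=> y j h0 h1; rewrite rowY pid3 vj // vj1.
Qed.

Lemma col_main {R : realType} {m n d} (a : 'I_m -> 'I_n -> 'rV[R]_d) (j0 : 'I_n) :
  (d = 2 \/ d = 3)%N ->
  injective (PK a) ->
  no_rank1_connections (fun X => exists z, X = PK a z) ->
  \rank (\matrix_(l < m) a l j0) = 2%N ->
  exists f, Repr f /\ (forall z, 0 <= f (PK a z)) /\ exists z, f (PK a z) != 0.
Proof.
move=> hd inj nr1 rk.
pose a' := fun j i => a i j.
have eT : forall z, PK a' z = (PK a z)^T.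
  by move=> z; apply/matrixP => j i; rewrite !mxE.
have inj' : injective (PK a').
  by move=> u v; rewrite !eT => /trmx_inj; apply: inj.
have nr1' : no_rank1_connections (fun X => exists z, X = PK a' z).
  move=> A B [z1 ->] [z2 ->] ne; rewrite !eT -linearB mxrank_tr.
  apply: nr1; [by exists z1|by exists z2|].
  by move=> h; apply: ne; rewrite !eT h.
have [f [Rf [fp [z fz]]]] := row_main a' j0 hd inj' nr1' rk.
exists (fun X => f X^T); split; first exact: Repr_tr.
split; first by move=> z'; rewrite -eT.
by exists z; rewrite -eT.
Qed.

Theorem lemma6 (R : realType) (m n d : nat) (a : 'I_m -> 'I_n -> 'rV[R]_d) :
  (d = 2 \/ d = 3)%N ->
  injective (PK a) ->
  no_rank1_connections (fun X => exists z, X = PK a z) ->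
  ((exists i0 : 'I_m, \rank (\matrix_(l < n) a i0 l) = 2%N) \/
   (exists j0 : 'I_n, \rank (\matrix_(l < m) a l j0) = 2%N)) ->
  exists beta : {ffun minor_idx m n -> R},
    beta != 0 /\
    (forall z : 'rV[R]_d, 0 <= \sum_(k : minor_idx m n) beta k * minor k (PK a z)) /\
    (exists z : 'rV[R]_d, \sum_(k : minor_idx m n) beta k * minor k (PK a z) != 0).
Proof.
move=> hd inj nr1 [[i0 rk]|[j0 rk]].
- have [f [Rf [fp fz]]] := row_main a i0 hd inj nr1 rk.
  exact: finish Rf fp fz.
- have [f [Rf [fp fz]]] := col_main a j0 hd inj nr1 rk.
  exact: finish Rf fp fz.
Qed.
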